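(* Let $S:\mathbb{R}^m\times\mathbb{R}^n\to\mathbb{R}^q$ be a bilinear map with lifted linear operator $\mathscr{S}:\mathbb{R}^{m\times n}\to\mathbb{R}^q$, let $\mathcal{K}\subseteq\mathbb{R}^m\times\mathbb{R}^n$, and let $\mathcal{K}'\subseteq\mathbb{R}^{m\times n}$ be any set satisfying $\mathcal{K}'\cap\{W\in\mathbb{R}^{m\times n}:\operatorname{rank}(W)\le 1\}=\{xy^T:(x,y)\in\mathcal{K}\}$. Fix $z\in\mathbb{R}^q$ and suppose the problem (P) ''find $(x,y)$ with $S(x,y)=z$ and $(x,y)\in\mathcal{K}$'' is feasible, i.e. has at least one solution. Let $\mathcal{K}_{\mathrm{opt}}$ be the set of solutions of (P), and let $\mathcal{K}'_{\mathrm{opt}}$ be the set of optimal solutions (minimizers) of the problem (Q) ''minimize $\operatorname{rank}(W)$ over $W\in\mathbb{R}^{m\times n}$ subject to $\mathscr{S}(W)=z$ and $W\in\mathcal{K}'$''. Then: (1) Problem (Q) is feasible and its optimal solutions have rank at most one; (2) $\mathcal{K}'_{\mathrm{opt}}\subseteq\{xy^T:(x,y)\in\mathcal{K}_{\mathrm{opt}}\}$; (3) $\mathcal{K}'_{\mathrm{opt}}=\{xy^T:(x,y)\in\mathcal{K}_{\mathrm{opt}}\}$ if and only if it is not the case that $\{0\}\subsetneq\{xy^T:(x,y)\in\mathcal{K}_{\mathrm{opt}}\}$.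
   Context: A map $S:\mathbb{R}^m\times\mathbb{R}^n\to\mathbb{R}^q$ is bilinear if it is linear in each argument when the other is fixed. For $j=1,\dots,q$ let $S_j\in\mathbb{R}^{m\times n}$ be the unique matrix with $(S(x,y))_j=x^TS_jy$ for all $x,y$. The lifted linear operator $\mathscr{S}:\mathbb{R}^{m\times n}\to\mathbb{R}^q$ is defined by $(\mathscr{S}(W))_j=\langle W,S_j\rangle=\operatorname{tr}(S_j^TW)$, so that $\mathscr{S}(xy^T)=S(x,y)$ for all $x,y$. *)

(* Defs.v *)
From HB Require Import structures.
From mathcomp Require Import all_boot all_order all_algebra.
From mathcomp Require Import reals.
Set Implicit Arguments. Unset Strict Implicit. Unset Printing Implicit Defensive.
Import Order.TTheory GRing.Theory Num.Theory.
Local Open Scope ring_scope.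

Definition bilinear_map (R : realType) (m n q : nat)
  (S : 'cV[R]_m -> 'cV[R]_n -> 'cV[R]_q) : Prop :=
  (forall (a : R) x1 x2 y, S (a *: x1 + x2) y = a *: S x1 y + S x2 y) /\
  (forall (a : R) x y1 y2, S x (a *: y1 + y2) = a *: S x y1 + S x y2).

(* S_j : the matrix with (S(x,y))_j = x^T S_j y, entries S_j(i,k) = (S(e_i,e_k))_j. *)
Definition Smat (R : realType) (m n q : nat)
  (S : 'cV[R]_m -> 'cV[R]_n -> 'cV[R]_q) (j : 'I_q) : 'M[R]_(m, n) :=
  \matrix_(i < m, k < n) (S (delta_mx i 0) (delta_mx k 0)) j 0.

Definition liftS (R : realType) (m n q : nat)
  (S : 'cV[R]_m -> 'cV[R]_n -> 'cV[R]_q) (W : 'M[R]_(m, n)) : 'cV[R]_q :=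
  \col_(j < q) \tr ((Smat S j)^T *m W).

Definition lift_set (R : realType) (m n : nat)
  (A : 'cV[R]_m -> 'cV[R]_n -> Prop) (W : 'M[R]_(m, n)) : Prop :=
  exists x y, A x y /\ W = x *m y^T.

Definition P_sol (R : realType) (m n q : nat)
  (S : 'cV[R]_m -> 'cV[R]_n -> 'cV[R]_q) (K : 'cV[R]_m -> 'cV[R]_n -> Prop)
  (z : 'cV[R]_q) (x : 'cV[R]_m) (y : 'cV[R]_n) : Prop :=
  S x y = z /\ K x y.

Definition Q_feas (R : realType) (m n q : nat)
  (S : 'cV[R]_m -> 'cV[R]_n -> 'cV[R]_q) (K' : 'M[R]_(m, n) -> Prop)
  (z : 'cV[R]_q) (W : 'M[R]_(m, n)) : Prop :=
  liftS S W = z /\ K' W.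

Definition Q_opt (R : realType) (m n q : nat)
  (S : 'cV[R]_m -> 'cV[R]_n -> 'cV[R]_q) (K' : 'M[R]_(m, n) -> Prop)
  (z : 'cV[R]_q) (W : 'M[R]_(m, n)) : Prop :=
  Q_feas S K' z W /\ (forall W', Q_feas S K' z W' -> (\rank W <= \rank W')%N).

(* Main.v *)
Require Import Defs.
From HB Require Import structures.
From mathcomp Require Import all_boot all_order all_algebra.
From mathcomp Require Import reals.
Import Order.TTheory GRing.Theory Num.Theory.
Local Open Scope ring_scope.

Section Aux.
Variables (R : realType) (m n q : nat) (S : 'cV[R]_m -> 'cV[R]_n -> 'cV[R]_q).
Hypothesis bS : bilinear_map S.

Lemma S0l y : S 0 y = 0.
Proof.
have := (proj1 bS) 1 0 0 y; rewrite !scale1r addr0.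
by move/(congr1 (fun v => v - S 0 y)) => /=; rewrite subrr addrK.
Qed.
Lemma S0r x : S x 0 = 0.
Proof.
have := (proj2 bS) 1 x 0 0; rewrite !scale1r addr0.
by move/(congr1 (fun v => v - S x 0)) => /=; rewrite subrr addrK.
Qed.
Lemma Ssuml I (r : seq I) P (f : I -> 'cV[R]_m) (a : I -> R) y :
  S (\sum_(i <- r | P i) a i *: f i) y = \sum_(i <- r | P i) a i *: S (f i) y.
Proof.
elim/big_rec2: _ => [|i u v _ <-]; first exact: S0l.
by rewrite (proj1 bS).
Qed.
Lemma Ssumr I (r : seq I) P (f : I -> 'cV[R]_n) (a : I -> R) x :
  S x (\sum_(i <- r | P i) a i *: f i) = \sum_(i <- r | P i) a i *: S x (f i).
Proof.
elim/big_rec2: _ => [|i u v _ <-]; first exact: S0r.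
by rewrite (proj2 bS).
Qed.

Lemma cV_delta p (x : 'cV[R]_p) : x = \sum_(i < p) x i 0 *: delta_mx i 0.
Proof.
rewrite {1}(matrix_sum_delta x); apply: eq_bigr => i _.
by rewrite big_ord1.
Qed.

Lemma liftS_rank1 x y : liftS S (x *m y^T) = S x y.
Proof.
apply/matrixP => j j0; rewrite (ord1 j0) mxE.
rewrite [in RHS](cV_delta _ x) Ssuml [in RHS](cV_delta _ y).
under [in RHS]eq_bigr => i _ do rewrite Ssumr.
rewrite summxE /mxtrace.
under eq_bigr => k _ do rewrite mxE.
rewrite exchange_big /=; apply: eq_bigr => i _.
rewrite mxE summxE big_distrr /=; apply: eq_bigr => k _.
rewrite !mxE big_ord1 !mxE.
by rewrite mulrC -mulrA [_ * S _ _ _ _]mulrC.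
Qed.

Lemma rank1_le (x : 'cV[R]_m) (y : 'cV[R]_n) : (\rank (x *m y^T) <= 1)%N.
Proof. exact: leq_trans (mxrankM_maxr _ _) (rank_leq_row _). Qed.
End Aux.

Theorem theorem1 (R : realType) (m n q : nat)
  (S : 'cV[R]_m -> 'cV[R]_n -> 'cV[R]_q)
  (K : 'cV[R]_m -> 'cV[R]_n -> Prop) (K' : 'M[R]_(m, n) -> Prop)
  (z : 'cV[R]_q) :
  bilinear_map S ->
  (forall W : 'M[R]_(m, n), (K' W /\ (\rank W <= 1)%N) <-> lift_set K W) ->
  (exists x y, P_sol S K z x y) ->
  ((exists W, Q_feas S K' z W) /\
   (forall W, Q_opt S K' z W -> (\rank W <= 1)%N)) /\
  (forall W, Q_opt S K' z W -> lift_set (P_sol S K z) W) /\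
  ((forall W, Q_opt S K' z W <-> lift_set (P_sol S K z) W) <->
   ~ (lift_set (P_sol S K z) 0 /\
      exists W, lift_set (P_sol S K z) W /\ W <> 0)).
Proof.
move=> bS hK [x0 [y0 [Sz Kxy]]].
have Lfeas : forall W, lift_set (P_sol S K z) W -> Q_feas S K' z W /\ (\rank W <= 1)%N.
  move=> W [x [y [[Sxy Kx] ->]]].
  have [hK'1 _] := proj2 (hK (x *m y^T)) (ex_intro _ x (ex_intro _ y (conj Kx erefl))).
  by split; [split; [rewrite liftS_rank1 | ] | exact: rank1_le].
have opt2 : forall W, Q_opt S K' z W -> lift_set (P_sol S K z) W.
  move=> W [[hl hk] hmin].
  have [f0 r0] := Lfeas (x0 *m y0^T) (ex_intro _ x0 (ex_intro _ y0 (conj (conj Sz Kxy) erefl))).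
  have r1 : (\rank W <= 1)%N := leq_trans (hmin _ f0) r0.
  have [x [y [Kx eW]]] := proj1 (hK W) (conj hk r1).
  exists x, y; split=> //; split=> //.
  by rewrite -hl eW liftS_rank1.
have feas0 : forall W, Q_feas S K' z W -> W = 0 -> lift_set (P_sol S K z) 0.
  move=> W [hl hk] eW; subst W.
  have r0 : (\rank (0 : 'M[R]_(m, n))%R <= 1)%N by rewrite mxrank0.
  have [x [y [Kx eW]]] := proj1 (hK 0) (conj hk r0).
  exists x, y; split=> //; split=> //.
  by rewrite -hl eW liftS_rank1.
split.
  have [f0 r0] := Lfeas (x0 *m y0^T) (ex_intro _ x0 (ex_intro _ y0 (conj (conj Sz Kxy) erefl))).
  split; first by exists (x0 *m y0^T).
  move=> W [_ hmin]; exact: leq_trans (hmin _ f0) r0.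
split=> //.
split.
  move=> heq [L0 [W [LW nW]]].
  have [_ hmin] := proj2 (heq W) LW.
  have [f0 _] := Lfeas 0 L0.
  have := hmin 0 f0; rewrite mxrank0 leqn0 mxrank_eq0 => /eqP.
  exact: nW.
move=> hnot W; split; first exact: opt2.
move=> LW; have [fW rW] := Lfeas W LW; split=> // W' fW'.
have [->|nW] := eqVneq W 0; first by rewrite mxrank0.
apply: leq_trans rW _; rewrite lt0n mxrank_eq0; apply/eqP => eW'.
apply: hnot; split; first exact: feas0 fW' eW'.
by exists W; split=> //; apply/eqP.
Qed.
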